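(* Let $X$ be a real Hilbert space, $W$ a real Banach space, $A\subset W$ closed, $r>0$, $T>0$, and let $\{Z(w);w\in A\}$ be a family of $r$-prox-regular subsets of $X$ satisfying: for every $\varepsilon>0$ there is $\delta>0$ such that $|w-\hat w|_W<\delta$ implies $d_H(Z(w),Z(\hat w))<\varepsilon$. Let $y\in G_R(0,T;X)$ and $w\in G_R(0,T;W)$ be such that $w(t)\in A$ and $\mathrm{dist}(y(t),Z(w(t)))\le r/2$ for every $t\in[0,T]$. Let $\zeta:[0,T]\to X$ be defined so that $\zeta(t)$ is the only vector in $Z(w(t))$ such that $$\langle y(t)-\zeta(t),\zeta(t)-z\rangle+\frac{|y(t)-\zeta(t)|}{2r}|\zeta(t)-z|^2\ge0\quad\forall z\in Z(w(t)).$$ Then $\zeta\in G_R(0,T;X)$.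
   Context: $X$ is a real Hilbert space with scalar product $\langle\cdot,\cdot\rangle$ and norm $|\cdot|$; $W$ a real Banach space with norm $|\cdot|_W$; $\mathrm{dist}(x,Z)=\inf_{z\in Z}|x-z|$; $d_H(Z,\hat Z)=\max\{\sup_{z\in Z}\mathrm{dist}(z,\hat Z),\sup_{\hat z\in\hat Z}\mathrm{dist}(\hat z,Z)\}$. A closed connected $Z\subset X$ is $r$-prox-regular if for every $y\in X$ with $\mathrm{dist}(y,Z)=d\in(0,r)$ there is $x\in Z$ with $\mathrm{dist}(x+\frac rd(y-x),Z)=\frac rd|y-x|=r$. For a Banach space $E$, $G_R(0,T;E)$ is the space of right-continuous regulated functions $f:[0,T]\to E$, i.e. functions with one-sided limits $f(t-)$, $f(t+)$ at every point and $f(t+)=f(t)$. *)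

(* Defs.v *)
From HB Require Import structures.
From mathcomp Require Import all_boot all_order all_algebra.
From mathcomp Require Import all_classical all_reals all_analysis.
Set Implicit Arguments. Unset Strict Implicit. Unset Printing Implicit Defensive.
Import Order.TTheory GRing.Theory Num.Theory.
Import numFieldNormedType.Exports.
Local Open Scope classical_set_scope.
Local Open Scope ring_scope.

(* A real inner product compatible with the norm of X: together with
   completeness of X (completeNormedModType) this makes X a real Hilbert space,
   <x,y> = ip x y and |x| = `|x|. *)
Definition inner_product (R : realType) (X : normedModType R) (ip : X -> X -> R) :=
  [/\ (forall x y, ip x y = ip y x),
      (forall a x y z, ip (a *: x + y) z = a * ip x z + ip y z) &
      (forall x, ip x x = `|x| ^+ 2)].

Definition dist (R : realType) (X : normedModType R) (x : X) (Z : set X) : R :=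
  inf [set `|x - z| | z in Z].

Definition dH (R : realType) (X : normedModType R) (Z Zh : set X) : \bar R :=
  maxe (ereal_sup [set (dist z Zh)%:E | z in Z])
       (ereal_sup [set (dist zh Z)%:E | zh in Zh]).

Definition prox_regular (R : realType) (X : normedModType R) (r : R) (Z : set X) :=
  [/\ closed Z, connected Z &
   forall y : X, 0 < dist y Z < r ->
     exists2 x, Z x &
       dist (x + (r / dist y Z) *: (y - x)) Z = r /\
       (r / dist y Z) * `|y - x| = r].

(* G_R(0,T;E): right-continuous regulated functions on [0,T]
   (a function R -> E of which only the values on [0,T] matter). *)
Definition regulated_rc (R : realType) (E : normedModType R) (T : R) (f : R -> E) :=
  (forall t, 0 < t <= T -> cvg (f @ t^'-)) /\
  (forall t, 0 <= t < T -> f @ t^'+ --> f t).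

(* Main.v *)
Require Import Defs.
From HB Require Import structures.
From mathcomp Require Import all_boot all_order all_algebra.
From mathcomp Require Import all_classical all_reals all_analysis.
From mathcomp Require Import ring lra.
Set Implicit Arguments. Unset Strict Implicit. Unset Printing Implicit Defensive.
Import Order.TTheory GRing.Theory Num.Theory.
Import numFieldNormedType.Exports.
Local Open Scope classical_set_scope.
Local Open Scope ring_scope.

Section Dist.
Variables (R : realType) (X : normedModType R).

Lemma dist_le (x : X) (Z : set X) z : Z z -> dist x Z <= `|x - z|.
Proof.
move=> Zz; apply: ge_inf; last by exists z.
by exists 0 => _ [u _ <-].
Qed.

Lemma dist_ge0 (x : X) (Z : set X) : dist x Z >= 0.
Proof.
have [[z Zz]|Z0] := pselect (Z !=set0).
  apply: lb_le_inf; first by exists `|x - z|, z.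
  by move=> _ [u _ <-].
have -> : Z = set0 by apply/seteqP; split => // u Zu; apply: Z0; exists u.
by rewrite /dist image_set0 inf0.
Qed.

Lemma dist_lt (x : X) (Z : set X) e : Z !=set0 -> dist x Z < e ->
  exists2 z, Z z & `|x - z| < e.
Proof.
move=> [z Zz] /inf_lt; case; first by exists `|x - z|, z.
by move=> _ [u Zu <-] lt; exists u.
Qed.

End Dist.

Section IP.
Variables (R : realType) (X : normedModType R) (ip : X -> X -> R).
Hypothesis Hip : inner_product ip.

Lemma ip0l z : ip 0 z = 0.
Proof.
case: Hip => _ H _; have := H 1 0 0 z.
rewrite scaler0 addr0 mul1r => /(congr1 (fun u => u - ip 0 z)).
by rewrite subrr addrK => ->.
Qed.

Lemma ipDl x y z : ip (x + y) z = ip x z + ip y z.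
Proof. by case: Hip => _ H _; rewrite -[x in LHS]scale1r H mul1r. Qed.

Lemma ipZl a x z : ip (a *: x) z = a * ip x z.
Proof. by case: Hip => _ H _; rewrite -[_ *: x]addr0 H ip0l addr0. Qed.

Lemma ipNl x z : ip (- x) z = - ip x z.
Proof. by rewrite -scaleN1r ipZl mulN1r. Qed.

Lemma ipC x z : ip x z = ip z x.
Proof. by case: Hip. Qed.

Lemma ipDr x y z : ip z (x + y) = ip z x + ip z y.
Proof. by rewrite ipC ipDl !(ipC z). Qed.

Lemma ipNr x z : ip z (- x) = - ip z x.
Proof. by rewrite ipC ipNl ipC. Qed.

Lemma ipZr a x z : ip z (a *: x) = a * ip z x.
Proof. by rewrite ipC ipZl ipC. Qed.

Lemma ipxx x : ip x x = `|x| ^+ 2.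
Proof. by case: Hip. Qed.

Lemma normD2 x y : `|x + y| ^+ 2 = `|x| ^+ 2 + 2 * ip x y + `|y| ^+ 2.
Proof.
rewrite -!ipxx ipDl !ipDr (ipC y x); ring.
Qed.

Lemma normB2 x y : `|x - y| ^+ 2 = `|x| ^+ 2 - 2 * ip x y + `|y| ^+ 2.
Proof. by rewrite normD2 ipNr normrN; ring. Qed.

Lemma normDZ2 a x y :
  `|x + a *: y| ^+ 2 = `|x| ^+ 2 + 2 * (a * ip x y) + a ^+ 2 * `|y| ^+ 2.
Proof. by rewrite normD2 ipZr normrZ exprMn real_normK ?num_real. Qed.

End IP.

Section PW.
Variables (R : realType) (X : normedModType R) (ip : X -> X -> R).
Hypothesis Hip : inner_product ip.

Lemma pw (r : R) (Z0 : set X) (y0 z0 : X) : 0 < r ->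
  prox_regular r Z0 -> dist y0 Z0 <= r / 2 -> Z0 z0 ->
  (forall v, Z0 v -> (forall z, Z0 z ->
        0 <= ip (y0 - v) (v - z) + `|y0 - v| / (2 * r) * `|v - z| ^+ 2) ->
     v = z0) -> `|y0 - z0| <= r / 2.
Proof.
move=> Hr [Zcl _ Hpr] Hd Zz Hu.
have d0 := dist_ge0 y0 Z0.
have [dpos|dz] : 0 < dist y0 Z0 \/ dist y0 Z0 = 0.
  by case: (ltrgt0P (dist y0 Z0)) => h; [left|move: d0; rewrite leNgt h|right].
- have dr : dist y0 Z0 < r by apply: le_lt_trans Hd _; lra.
  have [x Zx [Hp Hn]] := Hpr y0 (introT andP (conj dpos dr)) .
  set d := dist y0 Z0 in dpos dr Hp Hn Hd d0 *.
  clearbody d.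
  have dn0 : d != 0 by rewrite gt_eqF.
  have rn0 : r != 0 by rewrite gt_eqF.
  have nd : `|y0 - x| = d.
    have rd0 : r / d != 0 by rewrite mulf_neq0 // invr_eq0.
    apply: (mulfI rd0); rewrite Hn.
    by field; rewrite ?dn0.
  suff <- : x = z0 by rewrite nd.
  apply: Hu => // z Zz'.
  have := dist_le (x + (r / d) *: (y0 - x)) Zz'; rewrite Hp => hr.
  have hr2 : r ^+ 2 <= `|x + (r / d) *: (y0 - x) - z| ^+ 2.
    have := normr_ge0 (x + (r / d) *: (y0 - x) - z); nra.
  have e1 : x + (r / d) *: (y0 - x) - z = (x - z) + (r / d) *: (y0 - x).
    by rewrite addrAC.
  move: hr2; rewrite e1 (normD2 Hip) (ipZr Hip) normrZ ger0_norm; last first.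
    by apply: divr_ge0; lra.
  rewrite nd (ipC Hip) => hr2.
  have key : 0 <= `|x - z| ^+ 2 + 2 * (r / d * ip (y0 - x) (x - z)).
    move: hr2; have -> : r / d * d = r by field; rewrite ?dn0 ?rn0. lra.
  have -> : ip (y0 - x) (x - z) + d / (2 * r) * `|x - z| ^+ 2 =
     d / (2 * r) * (`|x - z| ^+ 2 + 2 * (r / d * ip (y0 - x) (x - z))) by field; rewrite ?dn0 ?rn0.
  apply: mulr_ge0 => //; apply: divr_ge0; lra.
- have Zy : Z0 y0.
    apply: Zcl => B /nbhs_normP [e e0 sB].
    have : dist y0 Z0 < e by rewrite dz.
    move=> /(dist_lt (ex_intro _ z0 Zz)) [z Zz' hz].
    by exists z; split => //; apply: sB.
  have <- := Hu y0 Zy.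
    by rewrite subrr normr0; lra.
  by move=> z _; rewrite subrr normr0 ip0l // mul0r mul0r addr0.
Qed.
End PW.

Section Est.
Variables (R : realType) (X : normedModType R) (ip : X -> X -> R).
Hypothesis Hip : inner_product ip.

Lemma est (r h : R) (y1 y2 z1 z2 c1 c2 : X) : 0 < r -> 0 < h -> h <= 1 ->
  `|y1 - c1| <= r / 2 -> `|y2 - c2| <= r / 2 ->
  0 <= ip (y1 - c1) (c1 - z1) + `|y1 - c1| / (2 * r) * `|c1 - z1| ^+ 2 ->
  0 <= ip (y2 - c2) (c2 - z2) + `|y2 - c2| / (2 * r) * `|c2 - z2| ^+ 2 ->
  `|c2 - z1| < h -> `|c1 - z2| < h ->
  `|c1 - c2| ^+ 2 <= 16 * `|y1 - y2| ^+ 2 + (2 * r ^+ 2 + 20) * h.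
Proof.
move=> r0 h0 h1 a1r a2r I1 I2 e1h e2h.
have E1 : c1 - z1 = (c1 - c2) + (c2 - z1) by rewrite addrA subrK.
have E2 : c2 - z2 = (c1 - z2) - (c1 - c2) by rewrite opprB [RHS]addrC addrA subrK.
have Ea : (y1 - c1) - (y2 - c2) = (y1 - y2) - (c1 - c2).
  by rewrite !opprB addrACA [RHS]addrACA [- c1 + _]addrC.
have Hpa : ip (y1 - c1) (c1 - c2) - ip (y2 - c2) (c1 - c2) =
    ip (y1 - y2) (c1 - c2) - `|c1 - c2| ^+ 2.
  by rewrite -(ipNl Hip) -(ipDl Hip) Ea (ipDl Hip) (ipNl Hip) (ipxx Hip).
move: I1 I2 Hpa; rewrite E1 E2.
move: a1r a2r e1h e2h.
move: (c1 - c2) (c2 - z1) (c1 - z2) (y1 - c1) (y2 - c2) (y1 - y2).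
move=> D e1 e2 a1 a2 u a1r a2r e1h e2h.
rewrite (normD2 Hip D e1) (normB2 Hip e2 D) (ipDr Hip) (ipDr Hip) (ipNr Hip).
move=> I1 I2 Hpa.
have Y1 := sqr_ge0 `|D + (-2) *: e1|; rewrite (normDZ2 Hip) in Y1.
have Y2 := sqr_ge0 `|D + 2 *: e2|; rewrite (normDZ2 Hip) in Y2.
have Y3 := sqr_ge0 `|D + (-4) *: u|; rewrite (normDZ2 Hip) in Y3.
have Y4 := sqr_ge0 `|e1 + (- h) *: a1|; rewrite (normDZ2 Hip) in Y4.
have Y5 := sqr_ge0 `|e2 + (- h) *: a2|; rewrite (normDZ2 Hip) in Y5.
rewrite (ipC Hip e2 D) in I2.
rewrite (ipC Hip u D) in Hpa.
rewrite (ipC Hip e1 a1) in Y4.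
rewrite (ipC Hip e2 a2) in Y5.
have n1 := normr_ge0 a1; have n2 := normr_ge0 a2.
have E1h : `|e1| ^+ 2 <= h ^+ 2 by have := normr_ge0 e1; nra.
have E2h : `|e2| ^+ 2 <= h ^+ 2 by have := normr_ge0 e2; nra.
have A1r : `|a1| ^+ 2 <= r ^+ 2 / 4 by nra.
have A2r : `|a2| ^+ 2 <= r ^+ 2 / 4 by nra.
have c1b : `|a1| / (2 * r) <= 1 / 4.
  by rewrite ler_pdivrMr ?mulr_gt0 //; lra.
have c2b : `|a2| / (2 * r) <= 1 / 4.
  by rewrite ler_pdivrMr ?mulr_gt0 //; lra.
have c1p : 0 <= `|a1| / (2 * r) by apply: divr_ge0; lra.
have c2p : 0 <= `|a2| / (2 * r) by apply: divr_ge0; lra.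
set B1 := `|D| ^+ 2 + 2 * ip D e1 + `|e1| ^+ 2 in I1.
set B2 := `|e2| ^+ 2 - 2 * ip D e2 + `|D| ^+ 2 in I2.
have B1p : 0 <= B1 by rewrite /B1 -(normD2 Hip); exact: sqr_ge0.
have B2p : 0 <= B2 by rewrite /B2 (ipC Hip D e2) -(normB2 Hip); exact: sqr_ge0.
have F1 : `|a1| / (2 * r) * B1 <= B1 / 4 by nra.
have F2 : `|a2| / (2 * r) * B2 <= B2 / 4 by nra.
have Q1 : 2 * ip a1 e1 <= h * (r ^+ 2 / 4 + 1).
  rewrite -(ler_pM2l h0); nra.
have Q2 : 2 * ip a2 e2 <= h * (r ^+ 2 / 4 + 1).
  rewrite -(ler_pM2l h0); nra.
have hh : h ^+ 2 <= h by nra.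
rewrite /B1 /B2 in F1 F2 I1 I2.
lra.
Qed.
End Est.

Unset Implicit Arguments.

Theorem corollary4p4 (R : realType)
  (X : completeNormedModType R) (ip : X -> X -> R) (Hip : inner_product ip)
  (W : completeNormedModType R) (A : set W) (HA : closed A)
  (r T : R) (Hr : 0 < r) (HT : 0 < T)
  (Z : W -> set X) (HZ : forall w, A w -> prox_regular r (Z w))
  (HZc : forall eps : R, 0 < eps -> exists2 delta : R, 0 < delta &
     forall w wh, A w -> A wh -> `|w - wh| < delta -> (dH (Z w) (Z wh) < eps%:E)%E)
  (y : R -> X) (w : R -> W) (Hy : regulated_rc T y) (Hw : regulated_rc T w)
  (HwA : forall t, 0 <= t <= T -> A (w t))
  (Hdist : forall t, 0 <= t <= T -> dist (y t) (Z (w t)) <= r / 2)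
  (zeta : R -> X)
  (Hzeta : forall t, 0 <= t <= T ->
     Z (w t) (zeta t) /\
     (forall z, Z (w t) z ->
        0 <= ip (y t - zeta t) (zeta t - z)
             + `|y t - zeta t| / (2 * r) * `|zeta t - z| ^+ 2))
  (Hzeta_uniq : forall t, 0 <= t <= T -> forall v, Z (w t) v ->
     (forall z, Z (w t) z ->
        0 <= ip (y t - v) (v - z) + `|y t - v| / (2 * r) * `|v - z| ^+ 2) ->
     v = zeta t) :
  regulated_rc T zeta.
Proof.
have Hrho : forall t, 0 <= t <= T -> `|y t - zeta t| <= r / 2.
  move=> t Ht; apply: (pw Hip Hr (HZ _ (HwA t Ht)) (Hdist t Ht) (Hzeta t Ht).1).
  exact: Hzeta_uniq.
have close : forall eps, 0 < eps -> exists2 eta, 0 < eta & exists2 delta, 0 < delta &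
    forall s t, 0 <= s <= T -> 0 <= t <= T -> `|y s - y t| < eta ->
      `|w s - w t| < delta -> `|zeta s - zeta t| < eps.
  move=> eps eps0.
  pose h := Order.min 1 (eps ^+ 2 / (4 * r ^+ 2 + 40)).
  have K0 : 0 < 4 * r ^+ 2 + 40 by have := sqr_ge0 r; lra.
  have h0 : 0 < h by rewrite lt_min ltr01 /=; apply: divr_gt0 => //; exact: exprn_gt0.
  have h1 : h <= 1 by rewrite ge_min lexx.
  have h2 : h <= eps ^+ 2 / (4 * r ^+ 2 + 40) by rewrite ge_min lexx orbT.
  have [delta d0 Hd] := HZc h h0.
  exists (eps / 6); first lra.
  exists delta => // s t Hs Ht hy hw.
  have := Hd _ _ (HwA s Hs) (HwA t Ht) hw.
  rewrite /dH => hdH.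
  have hz1 : (dist (zeta t) (Z (w s)) < h)%R.
    rewrite -lte_fin; apply: le_lt_trans hdH.
    rewrite le_max; apply/orP; right; apply: ereal_sup_ubound.
    by exists (zeta t) => //; exact: (Hzeta t Ht).1.
  have hz2 : (dist (zeta s) (Z (w t)) < h)%R.
    rewrite -lte_fin; apply: le_lt_trans hdH.
    rewrite le_max; apply/orP; left; apply: ereal_sup_ubound.
    by exists (zeta s) => //; exact: (Hzeta s Hs).1.
  have [z1 Zz1 hz1'] := dist_lt (ex_intro _ _ (Hzeta s Hs).1) hz1.
  have [z2 Zz2 hz2'] := dist_lt (ex_intro _ _ (Hzeta t Ht).1) hz2.
  have := est Hip Hr h0 h1 (Hrho s Hs) (Hrho t Ht) ((Hzeta s Hs).2 _ Zz1)
    ((Hzeta t Ht).2 _ Zz2) hz1' hz2'.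
  have hK : (2 * r ^+ 2 + 20) * h <= eps ^+ 2 / 2.
    have -> : eps ^+ 2 / 2 = (2 * r ^+ 2 + 20) * (eps ^+ 2 / (4 * r ^+ 2 + 40)).
      field; rewrite gt_eqF //.
    by apply: ler_wpM2l => //; have := sqr_ge0 r; lra.
  have := normr_ge0 (y s - y t); have := normr_ge0 (zeta s - zeta t).
  move=> n1 n2 hest; rewrite ltNge; apply/negP => hc.
  nra.
split.
- move=> t Ht; have /andP[t0 tT] := Ht.
  apply: cauchy_cvg; apply: cauchy_exP => eps eps0.
  have [eta eta0 [delta d0 Hc]] := close eps eps0.
  have cy := Hy.1 t Ht; have cw := Hw.1 t Ht.
  move/cvgrPdist_lt: cy => cy; move/cvgrPdist_lt: cw => cw.
  set ly := lim (y @ t^'-) in cy; set lw := lim (w @ t^'-) in cw.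
  have Hn : \forall s \near t^'-, [/\ 0 < s, s < t,
      `|ly - y s| < eta / 2 & `|lw - w s| < delta / 2].
    near=> s; split.
    - by near: s; exact: nbhs_left_gt.
    - by near: s; exact: nbhs_left_lt.
    - by near: s; apply: cy; lra.
    - by near: s; apply: cw; lra.
  have [s0 [s00 s0t ys0 ws0]] := filter_ex Hn.
  exists (zeta s0).
  apply: filterS Hn => s [s0' st ys ws].
  rewrite -ball_normE /=.
  apply: Hc.
  - by rewrite ltW //= (le_trans (ltW s0t)).
  - by rewrite ltW //= (le_trans (ltW st)).
  - apply: le_lt_trans (ler_distD ly _ _) _; rewrite distrC; lra.
  - apply: le_lt_trans (ler_distD lw _ _) _; rewrite distrC; lra.
- move=> t Ht; have /andP[t0 tT] := Ht.
  apply/cvgrPdist_lt => eps eps0.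
  have [eta eta0 [delta d0 Hc]] := close eps eps0.
  have cy := Hy.2 t Ht; have cw := Hw.2 t Ht.
  move/cvgrPdist_lt: cy => cy; move/cvgrPdist_lt: cw => cw.
  near=> s.
  have ts : t < s by near: s; exact: nbhs_right_gt.
  have sT : s < T by near: s; exact: nbhs_right_lt.
  apply: Hc.
  - by rewrite t0 ltW.
  - by rewrite (ltW sT) (le_trans t0 (ltW ts)).
  - by near: s; apply: cy.
  - by near: s; apply: cw.
Unshelve. all: by end_near.
Qed.
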